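(* Let $\mathcal{G}$ be a MAG and let $H_1,H_2,H$ be heads with maximal vertex $i$ such that $H_1\to^KH$ and $H_2\to^LH$ for some $K,L$. Then $H_3=\mathrm{barren}(H_1\cup H_2)$ is a head and $H_3\to^{K'}H$ for $K'=H_3\setminus H$.
   Context: A MAG is an acyclic directed mixed graph (directed and bidirected edges, no directed cycles) with $\mathrm{sib}(v)\cap\mathrm{an}(v)=\emptyset$ for all $v$ and in which every nonadjacent pair is m-separated by some set. Vertices are numbered topologically. $\mathrm{barren}_{\mathcal{G}'}(W)=\{w\in W:\mathrm{de}_{\mathcal{G}'}(w)\cap W=\{w\}\}$ (with $\mathrm{barren}=\mathrm{barren}_{\mathcal{G}}$); a nonempty $H$ is a head if $\mathrm{barren}(H)=H$ and $H$ lies in one district (bidirected-connected component) of $\mathcal{G}_{\mathrm{an}(H)}$. For a head $H$ with maximal vertex $i$ and $\emptyset\ne K\subseteq H\setminus\{i\}$, $H\to^KH'$ means $H'=\mathrm{barren}_{\mathcal{G}'}(\mathrm{dis}_{\mathcal{G}'}(i))$ where $\mathcal{G}'=\mathcal{G}_{\mathrm{an}(H)\setminus K}$. *)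

(* Defs.v *)
(* Mixed graphs on the vertex type 'I_n:
   d u v  <-> u -> v (directed edge),  b u v <-> u <-> v (bidirected edge). *)
From mathcomp Require Import all_boot.
Set Implicit Arguments. Unset Strict Implicit. Unset Printing Implicit Defensive.

Section MixedGraphs.
Variable T : finType.

Definition restr (A : {set T}) (e : rel T) : rel T :=
  fun u v => [&& u \in A, v \in A & e u v].

Definition anc (d : rel T) (W : {set T}) : {set T} :=
  [set u | [exists w in W, connect d u w]].

Definition desc (d : rel T) (w : T) : {set T} := [set x | connect d w x].

Definition barren (d : rel T) (W : {set T}) : {set T} :=
  [set w in W | desc d w :&: W == [set w]].

Definition dis (b : rel T) (A : {set T}) (i : T) : {set T} :=
  [set v | connect (restr A b) i v].

Definition adj (d b : rel T) (x y : T) : bool := [|| d x y, d y x | b x y].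
Definition arrowhead (d b : rel T) (x y : T) : bool := d x y || b x y.
Definition collider (d b : rel T) (x y z : T) : bool :=
  arrowhead d b x y && arrowhead d b z y.

Fixpoint triples_ok (d b : rel T) (Z : {set T}) (x y : T) (s : seq T) : bool :=
  match s with
  | [::] => true
  | z :: s' =>
      (if collider d b x y z then y \in anc d Z else y \notin Z)
      && triples_ok d b Z y z s'
  end.

Definition inner_ok (d b : rel T) (Z : {set T}) (u : T) (p : seq T) : bool :=
  if p is y :: s then triples_ok d b Z u y s else true.

Definition m_connected (d b : rel T) (Z : {set T}) (u v : T) : Prop :=
  exists p : seq T,
    [/\ last u p = v, uniq (u :: p), path (adj d b) u p & inner_ok d b Z u p].

Definition m_separated (d b : rel T) (Z : {set T}) (u v : T) : Prop :=
  [/\ u \notin Z, v \notin Z & ~ m_connected d b Z u v].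

Definition is_head (d b : rel T) (H : {set T}) : Prop :=
  [/\ H != set0, barren d H = H &
      {in H &, forall u v, connect (restr (anc d H) b) u v}].

End MixedGraphs.

(* MAG on 'I_n, with vertices numbered topologically (d u v -> u < v),
   which in particular makes the directed part acyclic. *)
Definition is_MAG (n : nat) (d b : rel 'I_n) : Prop :=
  [/\ (forall u v, d u v -> (u < v)%N),
      irreflexive b, symmetric b,
      (forall u v, b u v -> ~~ connect d u v)   (* sib(v) \cap an(v) = empty *)
    & (forall u v, u != v -> ~~ adj d b u v ->
         exists Z : {set 'I_n}, m_separated d b Z u v)].

Definition max_vertex (n : nat) (H : {set 'I_n}) (i : 'I_n) : Prop :=
  i \in H /\ forall h, h \in H -> (h <= i)%N.

Definition head_arrow (n : nat) (d b : rel 'I_n) (H K H' : {set 'I_n}) : Prop :=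
  exists i, [/\ max_vertex H i, K != set0, K \subset H :\ i &
    H' = barren (restr (anc d H :\: K) d) (dis b (anc d H :\: K) i)].

(* Main.v *)
Require Import Defs.
From mathcomp Require Import all_boot.
Set Implicit Arguments. Unset Strict Implicit. Unset Printing Implicit Defensive.

Lemma connect_ind_set (T : finType) (e : rel T) (S : {pred T}) x :
  x \in S -> (forall u v, u \in S -> e u v -> v \in S) ->
  forall y, connect e x y -> y \in S.
Proof.
move=> Sx step y /connectP [p pth ->].
elim: p x Sx pth => [|z p IH] x Sx //= /andP[exz pth].
exact: IH (step _ _ Sx exz) pth.
Qed.

Section H.
Variable n : nat.
Implicit Types (e d b : rel 'I_n) (A W : {set 'I_n}).

Lemma connect_mono e : (forall u v, e u v -> u < v) ->
  forall u v, connect e u v -> u <= v.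
Proof.
move=> mono u v c.
have := @connect_ind_set _ e [pred y : 'I_n | u <= y] u (leqnn u).
move=> /(_ _ v c) /=; apply => x y /= ux /mono xy.
exact: leq_trans ux (ltnW xy).
Qed.

Lemma connect_antisym e : (forall u v, e u v -> u < v) ->
  forall u v, connect e u v -> connect e v u -> u = v.
Proof.
move=> mono u v c1 c2; apply: val_inj; apply/eqP.
by rewrite eqn_leq (connect_mono mono c1) (connect_mono mono c2).
Qed.

Lemma restr_mono A e : (forall u v, e u v -> u < v) ->
  forall u v, restr A e u v -> u < v.
Proof. by move=> mono u v /and3P[_ _ /mono]. Qed.

Lemma barren_eq e W w y : w \in barren e W -> y \in W -> connect e w y -> y = w.
Proof.
rewrite inE => /andP[_ /eqP E] yW c.
have : y \in desc e w :&: W by rewrite !inE c yW.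
by rewrite E inE => /eqP.
Qed.

Lemma barrenS e W : barren e W \subset W.
Proof. by apply/subsetP => x; rewrite inE => /andP[]. Qed.

Lemma barren_ex e : (forall u v, e u v -> u < v) ->
  forall W x, x \in W -> exists2 w, w \in barren e W & connect e x w.
Proof.
move=> mono W x xW.
pose P := [pred y : 'I_n | (y \in W) && connect e x y].
have Px : P x by rewrite /P /= xW connect0.
case: (@arg_maxnP _ x P (fun y : 'I_n => val y) Px) => w /andP[wW xw] wmax.
exists w => //.
rewrite inE wW /=; apply/eqP/setP => y; rewrite !inE.
apply/idP/idP.
- case/andP=> wy yW; apply/eqP.
  have := wmax y; rewrite /P /= yW (connect_trans xw wy) => /(_ isT) yw.
  apply: val_inj; apply/eqP; rewrite eqn_leq yw.
  exact: connect_mono mono _ _ wy.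
- by move/eqP->; rewrite connect0 wW.
Qed.

Lemma restr_connect A e u v : connect (restr A e) u v -> connect e u v.
Proof.
move=> c.
have := @connect_ind_set _ (restr A e) [pred y : 'I_n | connect e u y] u (connect0 _ _).
move=> /(_ _ v c) /=; apply => x y /= ux /and3P[_ _ xy].
exact: connect_trans ux (connect1 xy).
Qed.

Lemma anc_closed d W x y : connect d x y -> y \in anc d W -> x \in anc d W.
Proof.
move=> c; rewrite !inE => /exists_inP [w wW yw].
by apply/exists_inP; exists w => //; apply: connect_trans c yw.
Qed.

Lemma anc_self d W x : x \in W -> x \in anc d W.
Proof. by move=> xW; rewrite inE; apply/exists_inP; exists x. Qed.

Lemma anc_mono d W W' : W \subset W' -> anc d W \subset anc d W'.
Proof.
move=> s; apply/subsetP => x; rewrite !inE => /exists_inP [w wW c].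
by apply/exists_inP; exists w => //; apply: (subsetP s).
Qed.

Lemma connect_restr d A W w y : anc d W \subset A ->
  connect d w y -> y \in anc d W -> connect (restr A d) w y.
Proof.
move=> sA /connectP [p pth ->].
elim: p w pth => [|z p IH] w //= /andP[wz pth] yA.
have zA : z \in anc d W.
  by apply: anc_closed yA; apply/connectP; exists p.
have wA : w \in anc d W by apply: anc_closed zA; apply: connect1.
apply: connect_trans (IH _ pth yA).
by apply: connect1; rewrite /restr (subsetP sA _ wA) (subsetP sA _ zA) wz.
Qed.

Lemma dis_sub b A i v : v \in dis b A i -> (v == i) || (v \in A).
Proof.
rewrite inE => c.
have := @connect_ind_set _ (restr A b) [pred y : 'I_n | (y == i) || (y \in A)] i.
have Si : i \in [pred y : 'I_n | (y == i) || (y \in A)] by rewrite inE /= eqxx.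
move=> /(_ Si) /(_ _ v c); apply.
by move=> x y _ /and3P[_ yA _]; rewrite inE /= yA orbT.
Qed.

Lemma dis_step b A i v w : v \in dis b A i -> restr A b v w -> w \in dis b A i.
Proof. by rewrite !inE => c e; apply: connect_trans c (connect1 e). Qed.

Lemma dis_mono b A A' i : A \subset A' -> dis b A i \subset dis b A' i.
Proof.
move=> s; apply/subsetP => v; rewrite [v \in dis b A i]inE => c.
have := @connect_ind_set _ (restr A b) (dis b A' i) i.
rewrite inE connect0 => /(_ isT) /(_ _ v c); apply.
move=> x y xD /and3P[xA yA xy]; apply: dis_step xD _.
by rewrite /restr (subsetP s _ xA) (subsetP s _ yA).
Qed.

Lemma barren_restr d A W E : anc d E \subset A -> W \subset anc d E ->
  barren (restr A d) W = barren d W.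
Proof.
move=> sA sW; apply/setP => w; rewrite !inE; congr (_ && _).
congr (_ == _); apply/setP => y; rewrite !inE.
case yW: (y \in W); rewrite ?andbF ?andbT //.
apply/idP/idP; first exact: restr_connect.
by move=> c; apply: connect_restr sA c (subsetP sW _ yW).
Qed.

End H.

Section M.
Variable n : nat.
Implicit Types (e d b : rel 'I_n) (A W : {set 'I_n}).

Lemma mem_barren e W y : y \in W ->
  (forall z, z \in W -> connect e y z -> z = y) -> y \in barren e W.
Proof.
move=> yW H; rewrite inE yW /=; apply/eqP/setP => z; rewrite !inE.
apply/idP/idP; first by case/andP => c zW; rewrite (H z zW c).
by move/eqP->; rewrite connect0 yW.
Qed.

Lemma barren_barren e W : barren e (barren e W) = barren e W.
Proof.
apply/setP => w; apply/idP/idP; first by apply: (subsetP (barrenS _ _)).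
move=> wB; apply: mem_barren => // z zB c.
exact: barren_eq wB (subsetP (barrenS _ _) _ zB) c.
Qed.

Lemma arrow_facts d b (H1 K H : {set 'I_n}) (i : 'I_n) : (forall u v, d u v -> u < v) ->
  barren d H1 = H1 -> i \in H1 -> i \notin K -> K \subset H1 ->
  H = barren (restr (anc d H1 :\: K) d) (dis b (anc d H1 :\: K) i) ->
  [/\ dis b (anc d H1 :\: K) i \subset anc d H,
      anc d H \subset anc d H1 :\: K,
      H \subset dis b (anc d H1 :\: K) i,
      i \in anc d H1 :\: K &
      dis b (anc d H1 :\: K) i \subset anc d H1 :\: K].
Proof.
move=> mono bH1 iH1 iK KH1 EH.
set A := anc d H1 :\: K.
have iA : i \in A by rewrite inE iK anc_self.
have DA : dis b A i \subset A.
  by apply/subsetP => v /dis_sub /orP [/eqP -> | ].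
have HD : H \subset dis b A i by rewrite EH barrenS.
have Danc : dis b A i \subset anc d H.
  apply/subsetP => v vD.
  have [w wB c] := barren_ex (restr_mono (A:=A) mono) vD.
  rewrite -EH in wB.
  by apply: anc_closed (restr_connect c) _; apply: anc_self.
have ancA : anc d H \subset A.
  apply/subsetP => x xH.
  have := xH; rewrite inE => /exists_inP [h hH xh].
  have hA : h \in A by apply: (subsetP DA); apply: (subsetP HD).
  move: (hA); rewrite inE => /andP [hK hanc].
  rewrite inE (anc_closed xh hanc) andbT.
  apply/negP => xK.
  have xH1 : x \in H1 by apply: (subsetP KH1).
  move: hanc; rewrite inE => /exists_inP [h1 h1H1 hh1].
  have e1 : h1 = x.
    have xB : x \in barren d H1 by rewrite bH1.
    exact: barren_eq xB h1H1 (connect_trans xh hh1).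
  subst h1.
  have := connect_antisym mono xh hh1; move=> exh; subst h.
  by rewrite xK in hK.
by split.
Qed.

End M.

Theorem propositionC6 (n : nat) (d b : rel 'I_n)
  (H1 H2 H : {set 'I_n}) (i : 'I_n) (K L : {set 'I_n}) :
  is_MAG d b ->
  is_head d b H1 -> is_head d b H2 -> is_head d b H ->
  max_vertex H1 i -> max_vertex H2 i -> max_vertex H i ->
  head_arrow d b H1 K H -> head_arrow d b H2 L H ->
  let H3 := barren d (H1 :|: H2) in
  is_head d b H3 /\ head_arrow d b H3 (H3 :\: H) H.
Proof.
move=> [mono _ _ _ _] [_ bH1 cH1] [_ bH2 cH2] [_ bH _] [iH1 mH1] [iH2 mH2] [iH mH].
move=> [i1 [[i1H1 m1] K0 KS EH1]] [i2 [[i2H2 m2] L0 LS EH2]] H3.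
have ei1 : i1 = i.
  by apply: val_inj; apply/eqP; rewrite eqn_leq (mH1 _ i1H1) (m1 _ iH1).
have ei2 : i2 = i.
  by apply: val_inj; apply/eqP; rewrite eqn_leq (mH2 _ i2H2) (m2 _ iH2).
subst i1 i2.
have iK : i \notin K by apply/negP => /(subsetP KS); rewrite !inE eqxx.
have iL : i \notin L by apply/negP => /(subsetP LS); rewrite !inE eqxx.
have KH1 : K \subset H1 by apply: subset_trans KS (subsetDl _ _).
have LH2 : L \subset H2 by apply: subset_trans LS (subsetDl _ _).
have [D1anc ancA1 HD1 iA1 DA1] := arrow_facts mono bH1 iH1 iK KH1 EH1.
have [D2anc ancA2 HD2 iA2 DA2] := arrow_facts mono bH2 iH2 iL LH2 EH2.
set A1 := anc d H1 :\: K in D1anc ancA1 HD1 iA1 DA1 EH1.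
set A2 := anc d H2 :\: L in D2anc ancA2 HD2 iA2 DA2 EH2.
have H3S : H3 \subset H1 :|: H2 by apply: barrenS.
have ancU : anc d (H1 :|: H2) \subset anc d H3.
  apply/subsetP => x; rewrite inE => /exists_inP [w wW xw].
  have [z zB wz] := barren_ex mono wW.
  by apply: anc_closed (connect_trans xw wz) (anc_self _ zB).
have anc3 : anc d H3 \subset anc d (H1 :|: H2) by apply: anc_mono.
have anc13 : anc d H1 \subset anc d H3.
  by apply: subset_trans ancU; apply: anc_mono; apply: subsetUl.
have anc23 : anc d H2 \subset anc d H3.
  by apply: subset_trans ancU; apply: anc_mono; apply: subsetUr.
have ancU' : forall x, x \in anc d H3 -> (x \in anc d H1) || (x \in anc d H2).
  move=> x /(subsetP anc3); rewrite !inE => /exists_inP [w].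
  rewrite inE => /orP [wH wc | wH wc].
    by apply/orP; left; apply/exists_inP; exists w.
  by apply/orP; right; apply/exists_inP; exists w.
have iH3 : i \in H3.
  apply: mem_barren; first by rewrite inE iH1.
  move=> z; rewrite inE => zW c; apply: val_inj; apply/eqP.
  rewrite eqn_leq (connect_mono mono c) andbT.
  by case/orP: zW => [/mH1 | /mH2].
have HA1 : H \subset A1 by apply: subset_trans HD1 DA1.
have ancH1 : anc d H \subset anc d H1.
  by apply: subset_trans ancA1 (subsetDl _ _).
have ancHA3 : anc d H \subset anc d H3 :\: (H3 :\: H).
  apply/subsetP => x xH; rewrite inE (subsetP anc13 _ (subsetP ancH1 _ xH)) andbT.
  apply/negP => /setDP [xH3 xnH].
  move: (xH); rewrite inE => /exists_inP [h hH xh].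
  have := subsetP ancH1 _ (anc_self d hH); rewrite inE => /exists_inP [y yH1 hy].
  have yW : y \in H1 :|: H2 by rewrite inE yH1.
  have ey := barren_eq xH3 yW (connect_trans xh hy).
  subst y.
  have exh := connect_antisym mono xh hy; subst h.
  by rewrite hH in xnH.
split.
  split.
  - by apply/set0Pn; exists i.
  - exact: barren_barren.
  - have toi : forall u, u \in H3 ->
        connect (restr (anc d H3) b) u i /\ connect (restr (anc d H3) b) i u.
      move=> u /(subsetP H3S); rewrite inE => /orP [uH | uH].
      + have sub : subrel (restr (anc d H1) b) (connect (restr (anc d H3) b)).
          move=> x y /and3P [xA yA xy]; apply: connect1.
          by rewrite /restr (subsetP anc13 _ xA) (subsetP anc13 _ yA) xy.
        by split; apply: (connect_sub sub); apply: cH1.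
      + have sub : subrel (restr (anc d H2) b) (connect (restr (anc d H3) b)).
          move=> x y /and3P [xA yA xy]; apply: connect1.
          by rewrite /restr (subsetP anc23 _ xA) (subsetP anc23 _ yA) xy.
        by split; apply: (connect_sub sub); apply: cH2.
    move=> u v uH vH.
    have [ui _] := toi u uH; have [_ iv] := toi v vH.
    exact: connect_trans ui iv.
exists i; split.
- split => // h /(subsetP H3S); rewrite inE => /orP [/mH1 | /mH2] //.
-
  have [k kK] := set0Pn _ K0.
  have kH1 : k \in H1 by apply: (subsetP KH1).
  have kW : k \in H1 :|: H2 by rewrite inE kH1.
  have [z zB kz] := barren_ex mono kW.
  apply/set0Pn; exists z; rewrite inE zB andbT.
  apply/negP => zH.
  have := subsetP ancH1 _ (anc_self d zH); rewrite inE => /exists_inP [h1 h1H1 zh1].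
  have kB : k \in barren d H1 by rewrite bH1.
  have e1 := barren_eq kB h1H1 (connect_trans kz zh1); subst h1.
  have ekz := connect_antisym mono kz zh1; subst z.
  by move: (subsetP HA1 _ zH); rewrite inE kK.
- by apply/subsetP => x; rewrite !inE => /andP [xnH ->]; rewrite andbT;
     apply: contraNneq xnH => ->.
set A3 := anc d H3 :\: (H3 :\: H) in ancHA3 *.
have D3D : dis b A3 i \subset dis b A1 i :&: dis b A2 i.
  apply/subsetP => v; rewrite [v \in dis b A3 i]inE => c.
  have Si : i \in dis b A1 i :&: dis b A2 i by rewrite !inE !connect0.
  apply: (@connect_ind_set _ (restr A3 b) _ i Si) c => x y.
  rewrite inE => /andP [xD1 xD2] /and3P [xA3 yA3 xy].
  have xA1 : x \in A1 by apply: (subsetP DA1).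
  have xA2 : x \in A2 by apply: (subsetP DA2).
  case yA1 : (y \in A1).
    have yD1 : y \in dis b A1 i by apply: dis_step xD1 _; rewrite /restr xA1 yA1 xy.
    have yA2 : y \in A2 by apply: (subsetP ancA2); apply: (subsetP D1anc).
    by rewrite inE yD1; apply: dis_step xD2 _; rewrite /restr xA2 yA2 xy.
  case yA2 : (y \in A2).
    have yD2 : y \in dis b A2 i by apply: dis_step xD2 _; rewrite /restr xA2 yA2 xy.
    have yA1' : y \in A1 by apply: (subsetP ancA1); apply: (subsetP D2anc).
    by rewrite yA1' in yA1.
  exfalso.
  move: yA3; rewrite /A3 inE => /andP [ynot yanc].
  have yH : y \notin H by apply: contraFN yA1 => /(subsetP HA1).
  have c1 : (y \in anc d H1) -> y \in K.
    by move=> ya; apply: contraFT yA1 => yK; rewrite /A1 inE yK ya.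
  have c2 : (y \in anc d H2) -> y \in L.
    by move=> ya; apply: contraFT yA2 => yK; rewrite /A2 inE yK ya.
  have yH3 : y \in H3.
    apply: mem_barren.
      case/orP: (ancU' _ yanc) => [/c1 /(subsetP KH1) | /c2 /(subsetP LH2)] yy;
        by rewrite inE yy ?orbT.
    move=> z; rewrite inE => /orP [zH1 | zH2] yz.
    + have yK : y \in K by apply: c1; apply: anc_closed yz (anc_self _ zH1).
      have yB : y \in barren d H1 by rewrite bH1; apply: (subsetP KH1).
      exact: barren_eq yB zH1 yz.
    + have yL : y \in L by apply: c2; apply: anc_closed yz (anc_self _ zH2).
      have yB : y \in barren d H2 by rewrite bH2; apply: (subsetP LH2).
      exact: barren_eq yB zH2 yz.
  by rewrite inE yH yH3 in ynot.
have D1H : dis b A1 i \subset dis b (anc d H) i.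
  apply/subsetP => v; rewrite [v \in dis b A1 i]inE => c.
  have Si : i \in dis b (anc d H) i by rewrite !inE connect0.
  apply: (@connect_ind_set _ (restr A1 b) _ i Si) c => x y xD /and3P [xA yA xy].
  have xD1 : x \in dis b A1 i by apply: (subsetP (dis_mono b i ancA1)).
  have yD1 : y \in dis b A1 i by apply: dis_step xD1 _; rewrite /restr xA yA xy.
  apply: dis_step xD _; rewrite /restr xy andbT (subsetP D1anc _ yD1).
  by rewrite (subsetP D1anc _ xD1).
have ED : dis b A3 i = dis b A1 i.
  apply/eqP; rewrite eqEsubset; apply/andP; split.
    by apply: subset_trans D3D (subsetIl _ _).
  by apply: subset_trans D1H (dis_mono b i ancHA3).
rewrite ED EH1 (barren_restr ancA1 D1anc) (barren_restr ancHA3 D1anc).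
by [].
Qed.
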